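(* Let $V\subset V'$ be an immediate extension of valuation rings, $K,K'$ their fraction fields, $\mathfrak m,\mathfrak m'$ their maximal ideals, $y_0\in V'$ and $y_1=y_0^2$. Assume $K'=K(y_0)$ and that for $e=0,1$, $y_e$ is a pseudo limit of a pseudo convergent sequence $v_e=(v_{e,j})_{j<\lambda_e}$ over $V$ which has no pseudo limit in $K$; set $y_{e,j}=(y_e-v_{e,j})/(v_{e,j+1}-v_{e,j})$. Then for every polynomial $g\in V[Y_0,Y_1]$ with $\deg_{Y_i}g\le1$ ($i=0,1$) and all ordinals $\nu_0<\lambda_0$, $\nu_1<\lambda_1$, there exist $\nu_0<j_0<\lambda_0$, $\nu_1<j_1<\lambda_1$, $c\in V\setminus\{0\}$ and a polynomial $g_1\in V[Y_{0,j_0},Y_{1,j_1}]$ such that $g(y_0,y_1)=c\,g_1(y_{0,j_0},y_{1,j_1})$, $g_1\notin\mathfrak m V[Y_{0,j_0},Y_{1,j_1}]$, and the values of the coefficients of all monomials of $g_1-g_1(0,0)$ are pairwise different.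
   Context: Let $\mathrm{val}$ denote the valuation of $V'$. For a limit ordinal $\lambda$, a sequence $(v_j)_{j<\lambda}$ in $V$ is pseudo convergent if $\mathrm{val}(v_i-v_{i''})<\mathrm{val}(v_{i'}-v_{i''})$ for all $i<i'<i''<\lambda$; $w$ is a pseudo limit if $\mathrm{val}(w-v_i)<\mathrm{val}(w-v_{i'})$ for all $i<i'<\lambda$. An extension of valuation rings is immediate if the induced residue field and value group extensions are equalities. *)

(* Defs.v *)
From HB Require Import structures.
From mathcomp Require Import all_boot all_order all_algebra.
Set Implicit Arguments. Unset Strict Implicit. Unset Printing Implicit Defensive.
Import Order.TTheory GRing.Theory Num.Theory.
Local Open Scope ring_scope.

(* Subsets of an ambient field L are modelled as predicates L -> Prop. *)
Section Defs.
Variable L : fieldType.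

Definition subring (S : L -> Prop) : Prop :=
  S 0 /\ S 1 /\ (forall x y, S x -> S y -> S (x - y)) /\
  (forall x y, S x -> S y -> S (x * y)).

Definition valuation_ring (S : L -> Prop) : Prop :=
  subring S /\ forall x, x != 0 -> S x \/ S x^-1.

Definition frac_field (S : L -> Prop) (x : L) : Prop :=
  exists a b, S a /\ S b /\ b != 0 /\ x = a / b.

Definition is_unit_of (S : L -> Prop) (x : L) : Prop :=
  x != 0 /\ S x /\ S x^-1.

Definition maxideal (S : L -> Prop) (x : L) : Prop :=
  S x /\ ~ is_unit_of S x.

(* val a <= val b for the valuation of the valuation ring S (val 0 = oo) *)
Definition vle (S : L -> Prop) (a b : L) : Prop :=
  (a = 0 -> b = 0) /\ (a != 0 -> S (b / a)).
Definition vlt (S : L -> Prop) (a b : L) : Prop := vle S a b /\ ~ vle S b a.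
Definition vsame (S : L -> Prop) (a b : L) : Prop := vle S a b /\ vle S b a.

Definition generated_by (K : L -> Prop) (y : L) : Prop :=
  forall x, exists p q : {poly L}, (forall i, K p`_i) /\ (forall i, K q`_i) /\
    q.[y] != 0 /\ x = p.[y] / q.[y].

(* evaluation of a bivariate polynomial: inner variable at a, outer at b *)
Definition eval2 (p : {poly {poly L}}) (a b : L) : L :=
  (map_poly (fun q : {poly L} => q.[a]) p).[b].

(* coefficient of Y1^i Y0^j (outer variable Y1, inner variable Y0) *)
Definition coef2 (p : {poly {poly L}}) (i j : nat) : L := (p`_i)`_j.

Section Seq.
Variables (d : Order.disp_t) (I : orderType d).

Definition limit_ordinal_type : Prop :=
  (exists i : I, True) /\ (forall i : I, exists j, (i < j)%O) /\
  (forall P : I -> Prop, (exists x, P x) ->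
     exists x, P x /\ forall y, P y -> (x <= y)%O).

Definition is_succ (s : I -> I) : Prop :=
  forall i, (i < s i)%O /\ forall k, (i < k)%O -> (s i <= k)%O.

Definition pseudo_convergent (S : L -> Prop) (v : I -> L) : Prop :=
  forall i i' i'', (i < i')%O -> (i' < i'')%O ->
    vlt S (v i - v i'') (v i' - v i'').

Definition pseudo_limit (S : L -> Prop) (v : I -> L) (w : L) : Prop :=
  forall i i', (i < i')%O -> vlt S (w - v i) (w - v i').

Definition yj (v : I -> L) (s : I -> I) (y : L) (j : I) : L :=
  (y - v j) / (v (s j) - v j).
End Seq.
End Defs.

(* Main.v *)
Require Import Defs.
From HB Require Import structures.
From mathcomp Require Import all_boot all_order all_algebra.
From mathcomp Require Import ring.
From Stdlib Require Import Classical.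
Import Order.TTheory GRing.Theory Num.Theory.
Local Open Scope ring_scope.


Definition lin {R : nzRingType} (c0 c1 : R) : {poly R} := c0%:P + c1%:P * 'X.

Lemma coef_lin {R : nzRingType} (c0 c1 : R) i :
  (lin c0 c1)`_i = if i == 0%N then c0 else if i == 1%N then c1 else 0.
Proof. by rewrite /lin coefD coefMX !coefC; case: i => [|[|i]] //=; rewrite ?addr0 ?add0r. Qed.

Definition quad {L : fieldType} (c0 c1 c2 : L) : {poly L} := lin c0 c1 + c2%:P * 'X^2.

Lemma coef_quad {L : fieldType} (c0 c1 c2 : L) i :
  (quad c0 c1 c2)`_i = if i == 0%N then c0 else if i == 1%N then c1 else if i == 2%N then c2 else 0.
Proof. by rewrite /quad coefD coefMXn coef_lin coefC; case: i => [|[|[|i]]] //=; rewrite ?addr0 ?add0r. Qed.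

Definition sh5 {L : fieldType} (c00 c01 c02 c10 c11 : L) : {poly {poly L}} :=
  lin (quad c00 c01 c02) (lin c10 c11).

Lemma coef2_sh5 {L : fieldType} (c00 c01 c02 c10 c11 : L) i j :
  coef2 (sh5 c00 c01 c02 c10 c11) i j =
  if i == 0%N then (if j == 0%N then c00 else if j == 1%N then c01 else if j == 2%N then c02 else 0)
  else if i == 1%N then (if j == 0%N then c10 else if j == 1%N then c11 else 0) else 0.
Proof.
rewrite /coef2 /sh5 coef_lin; case: i => [|[|i]] /=; rewrite ?coef_quad ?coef_lin ?coef0 //.
Qed.

Lemma horner_lin {L : fieldType} (c0 c1 a : L) : (lin c0 c1).[a] = c0 + c1 * a.
Proof. by rewrite /lin hornerD hornerMX !hornerC. Qed.

Lemma horner_quad {L : fieldType} (c0 c1 c2 a : L) :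
  (quad c0 c1 c2).[a] = c0 + c1 * a + c2 * a ^+ 2.
Proof. by rewrite /quad hornerD horner_lin hornerCM hornerXn. Qed.

Lemma eval2_lin {L : fieldType} (P0 P1 : {poly L}) a b :
  eval2 (lin P0 P1) a b = P0.[a] + P1.[a] * b.
Proof.
rewrite /eval2 (_ : (fun q : {poly L} => q.[a]) = horner_eval a) //.
by rewrite /lin rmorphD rmorphM /= !map_polyC map_polyX hornerD hornerMX !hornerC ?horner_evalE.
Qed.

Lemma eval2_sh5 {L : fieldType} (c00 c01 c02 c10 c11 a b : L) :
  eval2 (sh5 c00 c01 c02 c10 c11) a b = c00 + c01 * a + c02 * a ^+ 2 + (c10 + c11 * a) * b.
Proof. by rewrite /sh5 eval2_lin horner_quad horner_lin. Qed.

Lemma size2_lin {R : nzRingType} {p : {poly R}} : (size p <= 2)%N -> p = lin p`_0 p`_1.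
Proof.
move=> hp; apply/polyP => i; rewrite coef_lin; case: i => [|[|i]] //=.
by rewrite nth_default //; apply: leq_trans hp _.
Qed.
Section Sub.
Context {L : fieldType} {S : L -> Prop} (hS : subring S).
Lemma S0 : S 0. Proof. by case: hS. Qed.
Lemma S1 : S 1. Proof. by case: hS => _ []. Qed.
Lemma SB {x y} : S x -> S y -> S (x - y). Proof. by case: hS => _ [_ []] h _; apply: h. Qed.
Lemma SM {x y} : S x -> S y -> S (x * y). Proof. by case: hS => _ [_ [_ h]]; apply: h. Qed.
Lemma SN {x} : S x -> S (- x). Proof. by move=> h; rewrite -sub0r; apply: SB => //; apply: S0. Qed.
Lemma SD {x y} : S x -> S y -> S (x + y).
Proof. by move=> hx hy; rewrite -[y]opprK; apply: SB => //; apply: SN. Qed.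
Lemma frac_div {a b} : S a -> S b -> frac_field S (a / b).
Proof.
move=> ha hb; have [->|bn0] := eqVneq b 0.
  by exists 0, 1; rewrite invr0 mulr0 mul0r; split; [apply: S0|split; [apply: S1|split; [apply: oner_neq0|]]].
by exists a, b.
Qed.
End Sub.

Section Val.
Context {L : fieldType} {S : L -> Prop} (hS : valuation_ring S).
Let hsub : subring S. Proof. by case: hS. Qed.

Lemma vle_refl a : vle S a a.
Proof. by split=> // h; rewrite divff //; apply: S1. Qed.

Lemma vle0 a : vle S a 0.
Proof. by split=> // _; rewrite mul0r; apply: S0. Qed.

Lemma vle0l {b} : vle S 0 b -> b = 0.
Proof. by case=> h _; apply: h. Qed.

Lemma vle_trans {a b c} : vle S a b -> vle S b c -> vle S a c.
Proof.
move=> [h1 h2] [h3 h4]; split; first by move=> /h1 /h3.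
move=> an0; have [b0|bn0] := eqVneq b 0.
  by rewrite (h3 b0) mul0r; apply: S0.
have -> : c / a = (c / b) * (b / a) by rewrite mulrA divfK.
by apply: SM => //; [apply: h4|apply: h2].
Qed.

Lemma vle_total a b : vle S a b \/ vle S b a.
Proof.
have [->|an0] := eqVneq a 0; first by right; apply: vle0.
have [->|bn0] := eqVneq b 0; first by left; apply: vle0.
have : b / a != 0 by rewrite mulf_neq0 ?invr_eq0.
case: hS => _ /[apply] -[h|h].
  by left; split=> // /eqP; rewrite (negPf an0).
by right; split; [move=> /eqP; rewrite (negPf bn0)|rewrite invf_div in h].
Qed.

Lemma vle_add {a b c} : vle S a b -> vle S a c -> vle S a (b + c).
Proof.
move=> [h1 h2] [h3 h4]; split; first by move=> a0; rewrite h1 // h3 // addr0.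
by move=> an0; rewrite mulrDl; apply: SD => //; [apply: h2|apply: h4].
Qed.

Lemma vle_opp {a b} : vle S a b -> vle S a (- b).
Proof.
move=> [h1 h2]; split; first by move=> a0; rewrite h1 // oppr0.
by move=> an0; rewrite mulNr; apply: SN => //; apply: h2.
Qed.

Lemma vle_oppl {a b} : vle S a b -> vle S (- a) b.
Proof.
move=> [h1 h2]; split; first by move=> /eqP; rewrite oppr_eq0 => /eqP; apply: h1.
move=> an0; rewrite invrN mulrN; apply: SN => //; apply: h2.
by rewrite -oppr_eq0.
Qed.

Lemma vleM {a b} c : vle S a b -> vle S (a * c) (b * c).
Proof.
move=> [h1 h2]; have [->|cn0] := eqVneq c 0; first by rewrite !mulr0; apply: vle_refl.
split.
  by move=> /eqP; rewrite mulf_eq0 (negPf cn0) orbF => /eqP /h1 ->; rewrite mul0r.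
move=> acn0; have an0 : a != 0 by apply: contraNneq acn0 => ->; rewrite mul0r.
have -> : b * c / (a * c) = b / a by rewrite invfM mulrACA divff // mulr1.
by apply: h2.
Qed.

Lemma vleMK {a b c} : c != 0 -> vle S (a * c) (b * c) -> vle S a b.
Proof. by move=> cn0 h; have := vleM c^-1 h; rewrite !mulfK. Qed.

Lemma vle1 {x} : vle S 1 x -> S x.
Proof. by case=> _ /(_ (oner_neq0 _)); rewrite invr1 mulr1. Qed.

Lemma vlt_ne0 {a b} : vlt S a b -> a != 0.
Proof. by case=> [[h1 _] h]; apply/eqP => a0; apply: h; rewrite a0; apply: vle0. Qed.

Lemma vsame_ne0 {a b} : vsame S a b -> b != 0 -> a != 0.
Proof. by case=> [[h1 _] _] bn0; apply/eqP=> /h1; apply/eqP. Qed.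

Lemma vle_lt_trans {a b c} : vle S a b -> vlt S b c -> vlt S a c.
Proof.
move=> h1 [h2 h3]; split; first exact: vle_trans h1 h2.
by move=> h4; apply: h3; apply: vle_trans h4 h1.
Qed.

Lemma vlt_le_trans {a b c} : vlt S a b -> vle S b c -> vlt S a c.
Proof.
move=> [h1 h2] h3; split; first exact: vle_trans h1 h3.
by move=> h4; apply: h2; apply: vle_trans h3 h4.
Qed.

Lemma vlt_trans {a b c} : vlt S a b -> vlt S b c -> vlt S a c.
Proof. by move=> h1 [h2 _]; apply: vlt_le_trans h1 h2. Qed.

Lemma vlt_nsame {a b} : vlt S a b -> ~ vsame S a b.
Proof. by move=> [_ h] [_ h']. Qed.

Lemma vsame_sym {a b} : vsame S a b -> vsame S b a.
Proof. by case. Qed.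

Lemma vsame_trans {a b c} : vsame S a b -> vsame S b c -> vsame S a c.
Proof. by move=> [h1 h2] [h3 h4]; split; apply: vle_trans; eauto. Qed.

Lemma vsame_refl a : vsame S a a.
Proof. by split; apply: vle_refl. Qed.

Lemma vsameN a : vsame S a (- a).
Proof.
split; first by apply: vle_opp; apply: vle_refl.
by rewrite -{2}[a]opprK; apply: vle_opp; apply: vle_refl.
Qed.

Lemma vsameM {a b} c : vsame S a b -> vsame S (a * c) (b * c).
Proof. by case=> h1 h2; split; apply: vleM. Qed.

Lemma vsameMK {a b c} : c != 0 -> vsame S (a * c) (b * c) -> vsame S a b.
Proof. by move=> cn0 [h1 h2]; split; apply: vleMK h1 + apply: vleMK h2. Qed.

Lemma vltM {a b c} : c != 0 -> vlt S a b -> vlt S (a * c) (b * c).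
Proof. by move=> cn0 [h1 h2]; split; [apply: vleM|move=> h; apply: h2; apply: (vleMK cn0 h)]. Qed.

Lemma vlt_same {a b a' b'} : vsame S a a' -> vsame S b b' -> vlt S a b -> vlt S a' b'.
Proof.
move=> [h1 h2] [h3 h4] h; apply: vle_lt_trans h2 _.
by apply: vlt_le_trans h h3.
Qed.

Lemma ultra {a b} : vlt S a b -> vsame S a (a + b).
Proof.
move=> [h1 h2]; split; first by apply: vle_add => //; apply: vle_refl.
case: (vle_total (a + b) b) => h3.
  have := vle_add (vle_refl (a + b)) (vle_opp h3).
  by rewrite addrK.
exfalso; apply: h2.
have := vle_add h3 (vle_opp (vle_refl b)).
by rewrite addrK.
Qed.

Lemma ultraB {a b} : vlt S a b -> vsame S a (a - b).
Proof. move=> h; apply: ultra; apply: vlt_same h; [apply: vsame_refl|apply: vsameN]. Qed.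

Section Seq.
Context {d : Order.disp_t} {I : orderType d} {s : I -> I} {v : I -> L} {y : L}.
Hypothesis hsucc : is_succ s.
Hypothesis hlim : pseudo_limit S v y.

Lemma lt_succ k : (k < s k)%O. Proof. by case: (hsucc k). Qed.

Lemma gam {i k} : (i < k)%O -> vsame S (v k - v i) (y - v i).
Proof.
move=> ik; have h := ultraB (hlim _ _ ik).
have e : y - v i - (y - v k) = v k - v i by ring.
by rewrite e in h; apply: vsame_sym.
Qed.

Lemma dsame k : vsame S (v (s k) - v k) (y - v k).
Proof. exact: gam (lt_succ k). Qed.

Lemma ylne0 k : y - v k != 0.
Proof. exact: vlt_ne0 (hlim _ _ (lt_succ k)). Qed.

Lemma dne0 k : v (s k) - v k != 0.
Proof. exact: vsame_ne0 (dsame k) (ylne0 k). Qed.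

Lemma dlt k : vlt S (v (s k) - v k) (v (s (s k)) - v (s k)).
Proof. exact: vlt_same (vsame_sym (dsame k)) (vsame_sym (dsame (s k))) (hlim _ _ (lt_succ k)). Qed.

Lemma yj_eq k : y = v k + (v (s k) - v k) * yj v s y k.
Proof. by rewrite /yj mulrC divfK ?dne0 // addrC subrK. Qed.

Lemma const {z k} : vlt S (z - v k) (y - v k) ->
  vsame S (z - v (s k)) (z - v k) /\ vlt S (z - v (s k)) (y - v (s k)).
Proof.
move=> h.
have h' := vlt_same (vsame_refl _) (vsame_sym (dsame k)) h.
have h2 := ultraB h'.
have e : z - v k - (v (s k) - v k) = z - v (s k) by ring.
rewrite e in h2; split; first exact: vsame_sym.
apply: vlt_trans (hlim _ _ (lt_succ k)).
exact: vlt_same h2 (vsame_refl _) h.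
Qed.

Lemma exists_good (hlo : limit_ordinal_type I) z nu : ~ pseudo_limit S v z ->
  exists k, (nu < k)%O /\ vlt S (z - v k) (y - v k).
Proof.
move=> nl; apply: NNPP => hn; apply: nl => i i' ii'.
have H : forall k, (nu < k)%O -> vle S (y - v k) (z - v k).
  move=> k nk; case: (vle_total (y - v k) (z - v k)) => // h.
  apply: NNPP => h'; apply: hn; exists k; split => //.
have [k [ik nk]] : exists k, (i' < k)%O /\ (nu < k)%O.
  case: hlo => _ [hmax _]; case: (leP i' nu) => h.
    by have [k hk] := hmax nu; exists k; split => //; exact: le_lt_trans h hk.
  by have [k hk] := hmax i'; exists k; split => //; exact: lt_trans h hk.
have key : forall j, (j < k)%O -> vsame S (z - v j) (y - v j).
  move=> j jk.
  have h1 := vlt_le_trans (hlim _ _ jk) (H k nk).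
  have h2 := vlt_same (vsame_sym (gam jk)) (vsame_refl _) h1.
  have h3 := ultra h2.
  have e : v k - v j + (z - v k) = z - v j by ring.
  rewrite e in h3; exact: vsame_trans (vsame_sym h3) (gam jk).
exact: vlt_same (vsame_sym (key i (lt_trans ii' ik))) (vsame_sym (key i' ik)) (hlim _ _ ii').
Qed.
End Seq.

Lemma minlist {l : seq L} : has (fun x => x != 0) l ->
  exists c, c \in l /\ c != 0 /\ forall x, x \in l -> vle S c x.
Proof.
elim: l => [|x l IH] //= h.
have [x0|xn0] := eqVneq x 0.
  rewrite x0 eqxx /= in h; have [c [cs [cn hc]]] := IH h.
  exists c; split; first by rewrite inE cs orbT.
  split => // z; rewrite inE => /orP[/eqP->|/hc//]; rewrite x0; exact: vle0.
case hs: (has (fun x => x != 0) l).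
  have [c [cs [cn hc]]] := IH hs; case: (vle_total c x) => hcx.
    exists c; split; first by rewrite inE cs orbT.
    by split => // z; rewrite inE => /orP[/eqP->//|/hc//].
  exists x; split; first by rewrite inE eqxx.
  split => // z; rewrite inE => /orP[/eqP->|/hc/(vle_trans hcx)//]; exact: vle_refl.
exists x; split; first by rewrite inE eqxx.
split => // z; rewrite inE => /orP[/eqP->|zs]; first exact: vle_refl.
have : ~~ (z != 0) by move/hasPn: hs => /(_ z zs).
rewrite negbK => /eqP ->; exact: vle0.
Qed.

Lemma three A B C X Y : vlt S A B -> vlt S B C ->
  exists2 T, (T = A \/ T = B \/ T = C) & (~ vsame S T X /\ ~ vsame S T Y).
Proof.
move=> hAB hBC; have hAC := vlt_trans hAB hBC.
have clash : forall P Q Z, vlt S P Q -> vsame S P Z -> vsame S Q Z -> False.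
  by move=> P Q Z h h1 h2; apply: (vlt_nsame h); apply: vsame_trans h1 (vsame_sym h2).
case: (classic (vsame S A X \/ vsame S A Y)) => hA; last first.
  by exists A; [left|split => h; apply: hA; [left|right]].
case: (classic (vsame S B X \/ vsame S B Y)) => hB; last first.
  by exists B; [right; left|split => h; apply: hB; [left|right]].
case: (classic (vsame S C X \/ vsame S C Y)) => hC; last first.
  by exists C; [right; right|split => h; apply: hC; [left|right]].
exfalso.
case: hA => hA; case: hB => hB; case: hC => hC;
  first [exact: (clash _ _ _ hAB hA hB) | exact: (clash _ _ _ hAC hA hC)
        | exact: (clash _ _ _ hBC hB hC)].
Qed.

Lemma sh5_nd (c00 c01 c02 c10 c11 : L) :
  (c01 != 0 -> c02 != 0 -> ~ vsame S c01 c02) ->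
  (c01 != 0 -> c10 != 0 -> ~ vsame S c01 c10) ->
  (c01 != 0 -> c11 != 0 -> ~ vsame S c01 c11) ->
  (c02 != 0 -> c10 != 0 -> ~ vsame S c02 c10) ->
  (c02 != 0 -> c11 != 0 -> ~ vsame S c02 c11) ->
  (c10 != 0 -> c11 != 0 -> ~ vsame S c10 c11) ->
  forall i j i' j' : nat, (i, j) <> (0%N, 0%N) -> (i', j') <> (0%N, 0%N) ->
    (i, j) <> (i', j') -> coef2 (sh5 c00 c01 c02 c10 c11) i j != 0 ->
    coef2 (sh5 c00 c01 c02 c10 c11) i' j' != 0 ->
    ~ vsame S (coef2 (sh5 c00 c01 c02 c10 c11) i j) (coef2 (sh5 c00 c01 c02 c10 c11) i' j').
Proof.
move=> h1 h2 h3 h4 h5 h6 i j i' j'; rewrite !coef2_sh5.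
case: i => [|[|i]]; case: j => [|[|[|j]]]; case: i' => [|[|i']]; case: j' => [|[|[|j']]] => /= e1 e2 e3 n1 n2;
  try (by exfalso; apply: e1); try (by exfalso; apply: e2); try (by exfalso; apply: e3);
  try (by rewrite eqxx in n1); try (by rewrite eqxx in n2);
  first [ exact: h1 n1 n2 | exact: h2 n1 n2 | exact: h3 n1 n2 | exact: h4 n1 n2
        | exact: h5 n1 n2 | exact: h6 n1 n2
        | move=> hs; first [exact: h1 n2 n1 (vsame_sym hs) | exact: h2 n2 n1 (vsame_sym hs)
        | exact: h3 n2 n1 (vsame_sym hs) | exact: h4 n2 n1 (vsame_sym hs)
        | exact: h5 n2 n1 (vsame_sym hs) | exact: h6 n2 n1 (vsame_sym hs)]].
Qed.

Section Fin.
Context (V : L -> Prop) (hV : subring V) (hVS : forall x, V x -> S x)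
  (hK : forall x, frac_field V x -> S x -> V x).

Lemma unit1 : is_unit_of V 1.
Proof. by split; [exact: oner_neq0|split; [exact: S1 hV|rewrite invr1; exact: S1 hV]]. Qed.

Lemma finish (c00 c01 c02 c10 c11 : L) :
  V c00 -> V c01 -> V c02 -> V c10 -> V c11 ->
  has (fun x => x != 0) [:: c00; c01; c02; c10; c11] ->
  (forall i j i' j' : nat, (i, j) <> (0%N, 0%N) -> (i', j') <> (0%N, 0%N) ->
    (i, j) <> (i', j') -> coef2 (sh5 c00 c01 c02 c10 c11) i j != 0 ->
    coef2 (sh5 c00 c01 c02 c10 c11) i' j' != 0 ->
    ~ vsame S (coef2 (sh5 c00 c01 c02 c10 c11) i j) (coef2 (sh5 c00 c01 c02 c10 c11) i' j')) ->
  exists c (g1 : {poly {poly L}}), V c /\ c != 0 /\ (forall i j, V (coef2 g1 i j)) /\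
    (forall a b, eval2 (sh5 c00 c01 c02 c10 c11) a b = c * eval2 g1 a b) /\
    (exists i j, is_unit_of V (coef2 g1 i j)) /\
    (forall i j i' j' : nat, (i, j) <> (0%N, 0%N) -> (i', j') <> (0%N, 0%N) ->
         (i, j) <> (i', j') -> (coef2 g1 i j) != 0 -> (coef2 g1 i' j') != 0 ->
         ~ vsame S (coef2 g1 i j) (coef2 g1 i' j')).
Proof.
move=> v00 v01 v02 v10 v11 hne hdist.
have [c [cs [cn hc]]] := minlist hne.
have Vl : forall x, x \in [:: c00; c01; c02; c10; c11] -> V x.
  move=> x; rewrite !in_cons in_nil orbF.
  by move=> /orP[/eqP->|/orP[/eqP->|/orP[/eqP->|/orP[/eqP->|/eqP->]]]].
have Vc := Vl c cs.
set G := sh5 c00 c01 c02 c10 c11.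
exists c, (sh5 (c00 / c) (c01 / c) (c02 / c) (c10 / c) (c11 / c)).
have hcoef : forall i j, coef2 (sh5 (c00 / c) (c01 / c) (c02 / c) (c10 / c) (c11 / c)) i j
    = coef2 G i j / c.
  move=> i j; rewrite /G !coef2_sh5.
  by case: i => [|[|i]]; case: j => [|[|[|j]]] => //=; rewrite mul0r.
have hG : forall i j, coef2 G i j = 0 \/ coef2 G i j \in [:: c00; c01; c02; c10; c11].
  move=> i j; rewrite /G coef2_sh5.
  by case: i => [|[|i]]; case: j => [|[|[|j]]] => /=; (try by left); right; rewrite !inE eqxx ?orbT.
split => //; split => //; split.
  move=> i j; rewrite hcoef; apply: hK.
    apply: frac_div => //; case: (hG i j) => [->|/Vl //]; exact: S0 hV.
  case: (hG i j) => [->|/hc [_ h]]; first by rewrite mul0r; exact: S0 (proj1 hS).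
  exact: h.
split; first by move=> a b; rewrite !eval2_sh5; field.
split.
  move: cs; rewrite !in_cons in_nil orbF.
  move=> /orP[/eqP e|/orP[/eqP e|/orP[/eqP e|/orP[/eqP e|/eqP e]]]].
  - by exists 0%N, 0%N; rewrite hcoef /G coef2_sh5 /= -e divff //; exact: unit1.
  - by exists 0%N, 1%N; rewrite hcoef /G coef2_sh5 /= -e divff //; exact: unit1.
  - by exists 0%N, 2%N; rewrite hcoef /G coef2_sh5 /= -e divff //; exact: unit1.
  - by exists 1%N, 0%N; rewrite hcoef /G coef2_sh5 /= -e divff //; exact: unit1.
  - by exists 1%N, 1%N; rewrite hcoef /G coef2_sh5 /= -e divff //; exact: unit1.
move=> i j i' j' e1 e2 e3; rewrite !hcoef => n1 n2 hs.
apply: (hdist i j i' j' e1 e2 e3).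
- by apply: contraNneq n1 => ->; rewrite mul0r.
- by apply: contraNneq n2 => ->; rewrite mul0r.
- by apply: vsameMK hs; rewrite invr_neq0.
Qed.


Lemma idK (g00 g01 g10 g11 v d a w e b y0 y1 : L) :
  y0 = v + d * a -> y1 = w + e * b ->
  g00 + g01 * y0 + (g10 + g11 * y0) * y1 =
  (g00 + g01 * v + g10 * w + g11 * v * w) + ((g01 + g11 * w) * d) * a + 0 * a ^+ 2
   + (e * (g10 + g11 * v) + g11 * d * e * a) * b.
Proof. by move=> -> ->; ring. Qed.

Lemma idZ (v d a w e b y0 y1 : L) :
  y1 = y0 ^+ 2 -> y0 = v + d * a -> y1 = w + e * b ->
  0 = (v * v - w) + (v + v) * d * a + d * d * a ^+ 2 + (- e + 0 * a) * b.
Proof.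
move=> h1 h2 h3; have h : w + e * b = (v + d * a) ^+ 2 by rewrite -h3 -h2.
have -> : (v * v - w) + (v + v) * d * a + d * d * a ^+ 2 + (- e + 0 * a) * b
  = (v + d * a) ^+ 2 - (w + e * b) by ring.
by rewrite h subrr.
Qed.

Lemma fr0 : frac_field V 0.
Proof. by have := frac_div hV (S0 hV) (S1 hV); rewrite mul0r. Qed.

Lemma main_aux (d0 : Order.disp_t) (I0 : orderType d0) (s0 : I0 -> I0)
  (d1 : Order.disp_t) (I1 : orderType d1) (s1 : I1 -> I1)
  (v0 : I0 -> L) (v1 : I1 -> L) (y0 y1 : L) :
  y1 = y0 ^+ 2 ->
  limit_ordinal_type I0 -> is_succ s0 ->
  limit_ordinal_type I1 -> is_succ s1 ->
  (forall j, V (v0 j)) -> pseudo_limit S v0 y0 ->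
  (forall w, frac_field V w -> ~ pseudo_limit S v0 w) ->
  (forall j, V (v1 j)) -> pseudo_limit S v1 y1 ->
  (forall w, frac_field V w -> ~ pseudo_limit S v1 w) ->
  forall g : {poly {poly L}},
    (forall i j, V (coef2 g i j)) -> (size g <= 2)%N -> (forall i, leq (size g`_i) 2) ->
  forall (nu0 : I0) (nu1 : I1),
  exists (j0 : I0) (j1 : I1) (c : L) (g1 : {poly {poly L}}),
    (nu0 < j0)%O /\ (nu1 < j1)%O /\ V c /\ c != 0 /\
      (forall i j, V (coef2 g1 i j)) /\
      eval2 g y0 y1 = c * eval2 g1 (yj v0 s0 y0 j0) (yj v1 s1 y1 j1) /\
      (exists i j, is_unit_of V (coef2 g1 i j)) /\
      (forall i j i' j' : nat, (i, j) <> (0%N, 0%N) -> (i', j') <> (0%N, 0%N) ->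
         (i, j) <> (i', j') -> (coef2 g1 i j) != 0 -> (coef2 g1 i' j') != 0 ->
         ~ vsame S (coef2 g1 i j) (coef2 g1 i' j')).
Proof.
move=> ey1 hlo0 hs0 hlo1 hs1 hv0 hpl0 hnl0 hv1 hpl1 hnl1 g hgV hsz hszi nu0 nu1.
pose g00 := coef2 g 0 0; pose g01 := coef2 g 0 1.
pose g10 := coef2 g 1 0; pose g11 := coef2 g 1 1.
have hg : g = lin (lin g00 g01) (lin g10 g11).
  by rewrite {1}(size2_lin hsz) {1}(size2_lin (hszi 0%N)) {1}(size2_lin (hszi 1%N)).
have eg : eval2 g y0 y1 = g00 + g01 * y0 + (g10 + g11 * y0) * y1.
  by rewrite {1}hg eval2_lin !horner_lin.
have Vg00 : V g00 := hgV 0%N 0%N.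
have Vg01 : V g01 := hgV 0%N 1%N.
have Vg10 : V g10 := hgV 1%N 0%N.
have Vg11 : V g11 := hgV 1%N 1%N.
have VB := SB hV; have VM := SM hV; have VD := SD hV; have VN := SN hV.
case: (boolP [&& g00 == 0, g01 == 0, g10 == 0 & g11 == 0]) => hz.
  move/and4P: hz => [/eqP z00 /eqP z01 /eqP z10 /eqP z11].
  have e0 : eval2 g y0 y1 = 0 by rewrite eg z00 z01 z10 z11; ring.
  have [k0 [nk0 hk0]] := exists_good hpl0 hlo0 0 nu0 (hnl0 _ fr0).
  have [hc0 _] := const hs0 hpl0 hk0.
  pose dd j := v0 (s0 j) - v0 j; pose tw j := v0 j + v0 j.
  have [j0 [nj0 hnd0]] : exists j0, (nu0 < j0)%O /\ ~ vsame S (tw j0) (dd j0).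
    case: (classic (vsame S (tw k0) (dd k0))) => h; last by exists k0.
    exists (s0 k0); split; first exact: lt_trans nk0 (lt_succ hs0 k0).
    move=> h'.
    have htw : vsame S (tw (s0 k0)) (tw k0).
      have := vsameM (- (1 + 1)) hc0.
      have e : forall x : L, (0 - x) * - (1 + 1) = x + x by move=> x; ring.
      by rewrite !e.
    apply: (vlt_nsame (dlt hs0 hpl0 k0)).
    exact: vsame_trans (vsame_sym h) (vsame_trans (vsame_sym htw) h').
  have [k1 nk1] : exists k1, (nu1 < k1)%O by case: hlo1 => _ [hmax _]; exact: hmax.
  pose X := (v0 j0 + v0 j0) * dd j0; pose Y := dd j0 * dd j0.
  pose ee j := v1 (s1 j) - v1 j.
  have [j1 [nj1 [nX nY]]] : exists j1, (nu1 < j1)%O /\ ~ vsame S (ee j1) X /\ ~ vsame S (ee j1) Y.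
    have [T hT [h1 h2]] := three _ _ _ X Y (dlt hs1 hpl1 k1) (dlt hs1 hpl1 (s1 k1)).
    have lt1 := lt_succ hs1 k1; have lt2 := lt_succ hs1 (s1 k1).
    case: hT => [eT|[eT|eT]]; rewrite eT in h1 h2.
    - by exists k1.
    - by exists (s1 k1); split => //; exact: lt_trans nk1 lt1.
    - by exists (s1 (s1 k1)); split => //; exact: lt_trans (lt_trans nk1 lt1) lt2.
  have dn0 : dd j0 != 0 := dne0 hs0 hpl0 j0.
  have Vdd : V (dd j0) := VB _ _ (hv0 _) (hv0 _).
  have Vee : V (ee j1) := VB _ _ (hv1 _) (hv1 _).
  have := finish (v0 j0 * v0 j0 - v1 j1) X Y (- ee j1) 0
    (VB _ _ (VM _ _ (hv0 _) (hv0 _)) (hv1 _)) (VM _ _ (VD _ _ (hv0 _) (hv0 _)) Vdd)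
    (VM _ _ Vdd Vdd) (VN _ Vee) (S0 hV).
  case.
  - by apply/hasP; exists Y; [rewrite !inE eqxx ?orbT | rewrite mulf_neq0].
  - apply: sh5_nd.
    + by move=> _ _ hs; apply: hnd0; exact: vsameMK dn0 hs.
    + by move=> _ _ hs; apply: nX; exact: vsame_trans (vsameN _) (vsame_sym hs).
    + by move=> _; rewrite eqxx.
    + by move=> _ _ hs; apply: nY; exact: vsame_trans (vsameN _) (vsame_sym hs).
    + by move=> _; rewrite eqxx.
    + by move=> _; rewrite eqxx.
  move=> c [g1 [Vc [cn [Vg1 [ev [un dist]]]]]].
  exists j0, j1, c, g1.
  split; first exact: nj0. split; first exact: nj1. split; first exact: Vc.
  split; first exact: cn. split; first exact: Vg1. split; last by split.
  rewrite -ev eval2_sh5 e0.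
  rewrite /X /Y /ee /dd; eapply idZ; first exact: ey1.
  - exact: yj_eq hs0 hpl0 j0.
  - exact: yj_eq hs1 hpl1 j1.
pose z0 := - g10 / g11; pose z1 := - g01 / g11.
have frz0 : frac_field V z0 := frac_div hV (VN _ Vg10) Vg11.
have frz1 : frac_field V z1 := frac_div hV (VN _ Vg01) Vg11.
have [k0 [nk0 hk0]] := exists_good hpl0 hlo0 z0 nu0 (hnl0 _ frz0).
have [k1 [nk1 hk1]] := exists_good hpl1 hlo1 z1 nu1 (hnl1 _ frz1).
have [hc1 hc1'] := const hs1 hpl1 hk1.
pose v := v0 k0; pose d := v0 (s0 k0) - v; pose X := g10 + g11 * v.
pose K01 j := (g01 + g11 * v1 j) * d.
pose K10 j := (v1 (s1 j) - v1 j) * X.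
have dn0 : d != 0 := dne0 hs0 hpl0 k0.
have K01same : vsame S (K01 (s1 k1)) (K01 k1).
  have [g11z|g11n] := eqVneq g11 0.
    by rewrite /K01 g11z !mul0r !addr0; exact: vsame_refl.
  have e : forall j, g01 + g11 * v1 j = (z1 - v1 j) * (- g11).
    by move=> j; rewrite /z1; field.
  by rewrite /K01 !e; apply: vsameM; apply: vsameM.
have [j1 [nj1 [hg1 hnd01]]] : exists j1, (nu1 < j1)%O /\ vlt S (z1 - v1 j1) (y1 - v1 j1) /\
    (K01 j1 != 0 -> K10 j1 != 0 -> ~ vsame S (K01 j1) (K10 j1)).
  case: (classic (vsame S (K01 k1) (K10 k1))) => h; last by exists k1.
  exists (s1 k1); split; first exact: lt_trans nk1 (lt_succ hs1 k1).
  split => // _ n2 h'.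
  have Xn : X != 0 by apply: contraNneq n2 => X0; rewrite /K10 X0 mulr0.
  apply: (vlt_nsame (vltM Xn (dlt hs1 hpl1 k1))).
  exact: vsame_trans (vsame_sym h) (vsame_trans (vsame_sym K01same) h').
pose w := v1 j1; pose e := v1 (s1 j1) - w.
have en0 : e != 0 := dne0 hs1 hpl1 j1.
have Vd : V d := VB _ _ (hv0 _) (hv0 _).
have Ve : V e := VB _ _ (hv1 _) (hv1 _).
have Vv : V v := hv0 _.
have Vw : V w := hv1 _.
have := finish (g00 + g01 * v + g10 * w + g11 * v * w) (K01 j1) 0 (K10 j1) (g11 * d * e)
  (VD _ _ (VD _ _ (VD _ _ Vg00 (VM _ _ Vg01 Vv)) (VM _ _ Vg10 Vw)) (VM _ _ (VM _ _ Vg11 Vv) Vw))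
  (VM _ _ (VD _ _ Vg01 (VM _ _ Vg11 Vw)) Vd) (S0 hV)
  (VM _ _ Ve (VD _ _ Vg10 (VM _ _ Vg11 Vv))) (VM _ _ (VM _ _ Vg11 Vd) Ve).
case.
- have [g11z|g11n] := eqVneq g11 0; last first.
    by apply/hasP; exists (g11 * d * e); [rewrite !inE eqxx ?orbT | rewrite !mulf_neq0].
  have [g01z|g01n] := eqVneq g01 0; last first.
    apply/hasP; exists (K01 j1); first by rewrite !inE eqxx ?orbT.
    by rewrite /K01 g11z mul0r addr0 mulf_neq0.
  have [g10z|g10n] := eqVneq g10 0; last first.
    apply/hasP; exists (K10 j1); first by rewrite !inE eqxx ?orbT.
    by rewrite /K10 /X g11z mul0r addr0 mulf_neq0.
  have [g00z|g00n] := eqVneq g00 0; last first.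
    apply/hasP; exists (g00 + g01 * v + g10 * w + g11 * v * w); first by rewrite !inE eqxx ?orbT.
    by rewrite g11z g01z g10z !mul0r !addr0.
  by move: hz; rewrite g00z g01z g10z g11z eqxx.
- apply: sh5_nd.
  + by move=> _; rewrite eqxx.
  + exact: hnd01.
  + move=> _ n2 hs.
    have g11n : g11 != 0 by apply: contraNneq n2 => ->; rewrite !mul0r.
    have lt1 : vlt S (z1 - w) e := vlt_same (vsame_refl _) (vsame_sym (dsame hs1 hpl1 j1)) hg1.
    have cn : - g11 * d != 0 by rewrite mulf_neq0 // oppr_eq0.
    have H := vltM cn lt1.
    have e1 : K01 j1 = (z1 - w) * (- g11 * d) by rewrite /K01 /z1 /w; field.
    have e2 : g11 * d * e = - (e * (- g11 * d)) by ring.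
    rewrite e1 e2 in hs.
    exact: (vlt_nsame H) (vsame_trans hs (vsame_sym (vsameN _))).
  + by rewrite eqxx.
  + by rewrite eqxx.
  + move=> _ n2 hs.
    have g11n : g11 != 0 by apply: contraNneq n2 => ->; rewrite !mul0r.
    have lt0 : vlt S (z0 - v) d := vlt_same (vsame_refl _) (vsame_sym (dsame hs0 hpl0 k0)) hk0.
    have cn : - g11 * e != 0 by rewrite mulf_neq0 // oppr_eq0.
    have H := vltM cn lt0.
    have e1 : K10 j1 = (z0 - v) * (- g11 * e) by rewrite /K10 /X /z0 /e /w; field.
    have e2 : g11 * d * e = - (d * (- g11 * e)) by ring.
    rewrite e1 e2 in hs.
    exact: (vlt_nsame H) (vsame_trans hs (vsame_sym (vsameN _))).
move=> c [g1 [Vc [cn [Vg1 [ev [un dist]]]]]].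
exists k0, j1, c, g1.
split; first exact: nk0. split; first exact: nj1. split; first exact: Vc.
split; first exact: cn. split; first exact: Vg1. split; last by split.
rewrite -ev eval2_sh5 eg.
apply: idK.
- exact: yj_eq hs0 hpl0 k0.
- exact: yj_eq hs1 hpl1 j1.
Qed.

End Fin.
End Val.

Theorem lemma1p4 (L : fieldType) (V V' : L -> Prop)
  (d0 : Order.disp_t) (I0 : orderType d0) (s0 : I0 -> I0)
  (d1 : Order.disp_t) (I1 : orderType d1) (s1 : I1 -> I1)
  (v0 : I0 -> L) (v1 : I1 -> L) (y0 y1 : L) :
  (* V' is a valuation ring with fraction field K' = L *)
  valuation_ring V' ->
  (* V is a subring of V' with V = V' ∩ K, K the fraction field of V *)
  subring V -> (forall x, V x -> V' x) ->
  (forall x, frac_field V x -> V' x -> V x) ->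
  (* immediate: residue fields equal *)
  (forall x, V' x -> exists a, V a /\ maxideal V' (x - a)) ->
  (* immediate: value groups equal *)
  (forall x, x != 0 -> exists a, frac_field V a /\ a != 0 /\ is_unit_of V' (x / a)) ->
  V' y0 -> y1 = y0 ^+ 2 ->
  (* K' = K(y0) *)
  generated_by (frac_field V) y0 ->
  limit_ordinal_type I0 -> is_succ s0 ->
  limit_ordinal_type I1 -> is_succ s1 ->
  (forall j, V (v0 j)) -> pseudo_convergent V' v0 -> pseudo_limit V' v0 y0 ->
  (forall w, frac_field V w -> ~ pseudo_limit V' v0 w) ->
  (forall j, V (v1 j)) -> pseudo_convergent V' v1 -> pseudo_limit V' v1 y1 ->
  (forall w, frac_field V w -> ~ pseudo_limit V' v1 w) ->
  forall g : {poly {poly L}},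
    (forall i j, V (coef2 g i j)) -> (size g <= 2)%N -> (forall i, leq (size g`_i) 2) ->
  forall (nu0 : I0) (nu1 : I1),
  exists (j0 : I0) (j1 : I1) (c : L) (g1 : {poly {poly L}}),
    (nu0 < j0)%O /\ (nu1 < j1)%O /\ V c /\ c != 0 /\
      (forall i j, V (coef2 g1 i j)) /\
      eval2 g y0 y1 = c * eval2 g1 (yj v0 s0 y0 j0) (yj v1 s1 y1 j1) /\
      (exists i j, is_unit_of V (coef2 g1 i j)) /\
      (forall i j i' j' : nat, (i, j) <> (0%N, 0%N) -> (i', j') <> (0%N, 0%N) ->
         (i, j) <> (i', j') -> (coef2 g1 i j) != 0 -> (coef2 g1 i' j') != 0 ->
         ~ vsame V' (coef2 g1 i j) (coef2 g1 i' j')).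
Proof.
move=> hV' hV hVV' hK _ _ _ ey1 _ hlo0 hs0 hlo1 hs1 hv0 _ hpl0 hnl0 hv1 _ hpl1 hnl1.
move=> g hg hs hsi nu0 nu1.
have := (@main_aux _ _ hV' V hV hK _ _ _ _ _ _ _ _ _ _ ey1 hlo0 hs0 hlo1 hs1 hv0 hpl0 hnl0 hv1 hpl1 hnl1 g hg hs hsi nu0 nu1).
move=> H. exact: H.
Qed.
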